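(* Let $d$ be sufficiently large, $\delta\in(0,1)$, and let $\mathsf{ALG}$ be a deterministic first-order algorithm making $T=d^{1+\delta/6-o(1)}$ queries. Fix any $\mathbf{A}\in\{-1,1\}^{(d/2)\times d}$. Then with probability at least $1-d^{-\omega(1)}$ over independent uniform $\mathbf{v}_1,\dots,\mathbf{v}_N\in\frac1{\sqrt d}\{-1,1\}^d$, the correlation times of $\mathsf{ALG}$ run on $F_{\mathbf{A},V}$ satisfy $t_1\le t_2\le\cdots\le t_N$.
   Context: Hard function: $F_{\mathbf{A},V}(\mathbf{x})=\frac{1}{\sqrt dL}\max\{L\|\mathbf{A}\mathbf{x}\|_\infty-1,\max_{i\in[N]}(\langle\mathbf{v}_i,\mathbf{x}\rangle-i\gamma)\}$ on $\mathbb{B}^d$, with $V=(\mathbf{v}_1,\dots,\mathbf{v}_N)$, $\gamma=\log^2 d/d^{\delta/4}$, $N=d^{\delta/6}/\log^4 d$, $L=\exp(\log^5 d)$. The algorithm accesses $F$ through the oracle returning $F(\mathbf{x})$ and subgradient $\mathbf{g}(\mathbf{x})$: if the maximum is attained by $(\pm L\langle\mathbf{A}_j,\mathbf{x}\rangle-1)/(\sqrt dL)$ for some row $\mathbf{A}_j$, return $\pm\mathbf{A}_j/\sqrt d$ (correct sign) for the smallest such $j$; otherwise return $\mathbf{v}_i/(\sqrt dL)$ for the smallest $i$ attaining the maximum. Correlation time: with $\xi=2/L$, for $i\in[N]$, $t_i\in[T]\cup\{\infty\}$ is the first round in which $\mathsf{ALG}$ queries a point $\mathbf{x}_{t_i}$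 with $|\langle\mathbf{x}_{t_i},\mathbf{v}_i\rangle|\ge\gamma/4$ and $\|\mathbf{A}\mathbf{x}_{t_i}\|_\infty\le\xi$; $t_i=\infty$ if no such query exists. *)

(* Defs.v *)
From HB Require Import structures.
From mathcomp Require Import all_boot all_order all_algebra.
From mathcomp Require Import all_classical all_reals all_analysis.
Set Implicit Arguments. Unset Strict Implicit. Unset Printing Implicit Defensive.
Import Order.TTheory GRing.Theory Num.Theory.
Local Open Scope ring_scope.

Section HardFunction.
Variable R : realType.

Definition gam (d : nat) (delta : R) : R := (ln (d%:R : R)) ^+ 2 / ((d%:R : R) `^ (delta / 4)).
Definition NN (d : nat) (delta : R) : nat :=
  Num.truncn ((d%:R : R) `^ (delta / 6) / (ln (d%:R : R)) ^+ 4).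
Definition LL (d : nat) : R := expR ((ln (d%:R : R)) ^+ 5).
Definition xi (d : nat) : R := 2 / LL d.

Variables (d m N : nat).

Definition ip (u w : 'cV[R]_d) : R := \sum_(k < d) u k 0 * w k 0.

Definition in_ball (x : 'cV[R]_d) : bool := \sum_(k < d) x k 0 ^+ 2 <= 1.

Definition norm_inf_Ax (A : 'M[R]_(m, d)) (x : 'cV[R]_d) : R :=
  \big[Num.max/0]_(j < m) `|(A *m x) j 0|.

Definition vec_of (s : {ffun 'I_N * 'I_d -> bool}) (i : 'I_N) : 'cV[R]_d :=
  \col_k ((if s (i, k) then 1 else -1) / Num.sqrt (d%:R : R)).

Variables (gamma L : R) (A : 'M[R]_(m, d)) (v : 'I_N -> 'cV[R]_d).

Definition aterm (x : 'cV[R]_d) : R := L * norm_inf_Ax A x - 1.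
Definition vterm (x : 'cV[R]_d) (i : 'I_N) : R := ip (v i) x - (i.+1)%:R * gamma.
Definition vmax (x : 'cV[R]_d) : R := \big[Num.max/aterm x]_(i < N) vterm x i.

Definition Fval (x : 'cV[R]_d) : R := vmax x / (Num.sqrt (d%:R : R) * L).

Definition subgrad (x : 'cV[R]_d) : 'cV[R]_d :=
  if [forall i, vterm x i <= aterm x] then
    match [seq j <- enum 'I_m | `|(A *m x) j 0| == norm_inf_Ax A x] with
    | j :: _ => ((if 0 <= (A *m x) j 0 then 1 else -1) / Num.sqrt (d%:R : R))
                  *: (row j A)^T
    | [::] => 0
    end
  else
    match [seq i <- enum 'I_N | vterm x i == vmax x] with
    | i :: _ => (Num.sqrt (d%:R : R) * L)^-1 *: v i
    | [::] => 0
    end.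

Definition oracle (x : 'cV[R]_d) : R * 'cV[R]_d := (Fval x, subgrad x).

(* A deterministic first-order algorithm: the next query is a function of the
   transcript of all previous oracle answers. *)
Variable ALG : seq (R * 'cV[R]_d) -> 'cV[R]_d.

Fixpoint transcript (t : nat) : seq (R * 'cV[R]_d) :=
  match t with
  | 0 => [::]
  | t.+1 => let h := transcript t in rcons h (oracle (ALG h))
  end.

(* query of round k.+1 (rounds are numbered 1..T) *)
Definition query (k : nat) : 'cV[R]_d := ALG (transcript k).

Variable T : nat.
Variable xi0 : R.

Definition corr_cond (i : 'I_N) (x : 'cV[R]_d) : bool :=
  (gamma / 4 <= `|ip x (v i)|) && (norm_inf_Ax A x <= xi0).

(* correlation time t_i in [T] \cup {infinity}; None encodes infinity *)
Definition corr_time (i : 'I_N) : option nat :=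
  let k := find (fun k => corr_cond i (query k)) (iota 0 T) in
  if (k < T)%N then Some k.+1 else None.

End HardFunction.

Definition time_le (a b : option nat) : bool :=
  match a, b with
  | _, None => true
  | None, Some _ => false
  | Some x, Some y => (x <= y)%N
  end.

Definition sorted_times (R : realType) (d : nat) (delta : R)
  (A : 'M[R]_(d./2, d)) (ALG : seq (R * 'cV[R]_d) -> 'cV[R]_d) (T : nat)
  (s : {ffun 'I_(NN d delta) * 'I_d -> bool}) : bool :=
  let v := vec_of R s in
  let t := corr_time (gam d delta) (LL R d) A v ALG T (xi R d) in
  [forall i : 'I_(NN d delta), forall j : 'I_(NN d delta),
     (i <= j)%N ==> time_le (t i) (t j)].

(* probability, over uniform sign patterns s (i.e. independent uniform
   v_1..v_N in (1/sqrt d){-1,1}^d), that the correlation times are NOT sorted *)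
Definition fail_prob (R : realType) (d : nat) (delta : R)
  (A : 'M[R]_(d./2, d)) (ALG : seq (R * 'cV[R]_d) -> 'cV[R]_d) (T : nat) : R :=
  (#|[set s | ~~ @sorted_times R d delta A ALG T s]|)%:R
  / (#|{: {ffun 'I_(NN d delta) * 'I_d -> bool}}|)%:R.

(* Main.v *)
Require Import Defs.
From HB Require Import structures.
From mathcomp Require Import all_boot all_order all_algebra.
From mathcomp Require Import all_classical all_reals all_analysis.
From mathcomp Require Import ring lra.
Import Order.TTheory GRing.Theory Num.Theory numFieldNormedType.Exports.
Local Open Scope ring_scope.

Section Det.
Variables (R : realType) (d m N : nat) (gamma L : R) (A : 'M[R]_(m, d)).

Lemma vmax_le (v v' : 'I_N -> 'cV[R]_d) x D :
  D <= vmax gamma L A v' x ->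
  (forall l, v l != v' l -> vterm gamma v x l < D) ->
  vmax gamma L A v x <= vmax gamma L A v' x.
Proof.
move=> hD hl; rewrite /vmax; apply: bigmax_le => [|i _].
  exact: bigmax_ge_id.
have [e|ne] := eqVneq (v i) (v' i).
  by rewrite /vterm e; exact: le_bigmax.
by apply/ltW/(lt_le_trans (hl i ne)).
Qed.

Lemma forall_vmax (v : 'I_N -> 'cV[R]_d) x :
  [forall i, vterm gamma v x i <= aterm L A x] = (vmax gamma L A v x <= aterm L A x).
Proof.
apply/forallP/idP.
  by move=> h; rewrite /vmax; apply: bigmax_le => // i _; exact: h.
by move=> h i; apply: le_trans h; exact: le_bigmax.
Qed.

Lemma D_le_vmax (v v' : 'I_N -> 'cV[R]_d) x D :
  (D = aterm L A x \/ exists i, v i = v' i /\ D = vterm gamma v x i) ->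
  D <= vmax gamma L A v x /\ D <= vmax gamma L A v' x.
Proof.
case=> [->|[i [e ->]]]; first by split; exact: bigmax_ge_id.
split; first exact: le_bigmax.
by rewrite /vterm e; exact: le_bigmax.
Qed.

Lemma oracle_eq (v v' : 'I_N -> 'cV[R]_d) x D :
  (D = aterm L A x \/ exists i, v i = v' i /\ D = vterm gamma v x i) ->
  (forall l, v l != v' l -> vterm gamma v x l < D /\ vterm gamma v' x l < D) ->
  oracle gamma L A v x = oracle gamma L A v' x.
Proof.
move=> hD hl.
have [h1 h2] := @D_le_vmax v v' x D hD.
have em : vmax gamma L A v x = vmax gamma L A v' x.
  apply: le_anti; rewrite (@vmax_le v v' x D h2); last by move=> l /hl [].
  apply: (@vmax_le v' v x D h1) => l; rewrite eq_sym => /hl []; done.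
rewrite /oracle /Fval em; congr pair.
rewrite /subgrad !forall_vmax em.
case: ifP => // _.
have h1' : D <= vmax gamma L A v' x by rewrite -em.
have ef : [seq i <- enum 'I_N | vterm gamma v x i == vmax gamma L A v' x] =
          [seq i <- enum 'I_N | vterm gamma v' x i == vmax gamma L A v' x].
  apply: eq_filter => i /=.
  have [e|ne] := eqVneq (v i) (v' i); first by rewrite /vterm e.
  have [a b] := hl i ne.
  by rewrite (lt_eqF (lt_le_trans a h1')) (lt_eqF (lt_le_trans b h1')).
rewrite -ef.
case E: [seq i <- enum 'I_N | vterm gamma v x i == vmax gamma L A v' x] => [//|i s].
have : i \in [seq i <- enum 'I_N | vterm gamma v x i == vmax gamma L A v' x].
  by rewrite E inE eqxx.
rewrite mem_filter => /andP [/eqP hi _].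
have [e|ne] := eqVneq (v i) (v' i); first by rewrite e.
have [a _] := hl i ne.
by move: (lt_le_trans a h1'); rewrite hi ltxx.
Qed.

Definition vsh (v : 'I_N -> 'cV[R]_d) (i : 'I_N) : 'I_N -> 'cV[R]_d :=
  fun l => if (l <= i)%N then v l else 0.

Lemma ip_sym (u w : 'cV[R]_d) : ip u w = ip w u.
Proof. by rewrite /ip; apply: eq_bigr => k _; rewrite mulrC. Qed.

Lemma ip0 (w : 'cV[R]_d) : ip 0 w = 0.
Proof. by rewrite /ip big1 // => k _; rewrite mxE mul0r. Qed.

Variable ALG : seq (R * 'cV[R]_d) -> 'cV[R]_d.

Lemma det_main (v : 'I_N -> 'cV[R]_d) (T : nat) :
  0 < gamma -> 0 < L ->
  (forall (i l : 'I_N) k, (i < l)%N -> (k < T)%N ->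
     `|ip (query gamma L A (vsh v i) ALG k) (v l)| < gamma / 4) ->
  forall i j : 'I_N, (i <= j)%N ->
    time_le (corr_time gamma L A v ALG T (2 / L) i)
            (corr_time gamma L A v ALG T (2 / L) j).
Proof.
move=> g0 L0 hyp i j lij.
rewrite /corr_time.
set Pj := (fun k => corr_cond gamma A v (2 / L) j (query gamma L A v ALG k)).
set Pi := (fun k => corr_cond gamma A v (2 / L) i (query gamma L A v ALG k)).
case kjT: (find Pj (iota 0 T) < T)%N; last by case: ifP.
set kj := find Pj (iota 0 T).
have hj : Pj kj.
  have := @nth_find _ 0%N Pj (iota 0 T).
  rewrite nth_iota ?add0n // => h; apply: h.
  by rewrite has_find size_iota.
case: (leqP (find Pi (iota 0 T)) kj) => [le|lt].
  by rewrite (leq_ltn_trans le kjT) /=; rewrite ltnS.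
have hi : forall k, (k <= kj)%N -> Pi k = false.
  move=> k lek.
  have := @before_find _ 0%N Pi (iota 0 T) k (leq_ltn_trans lek lt).
  by rewrite nth_iota ?add0n // (leq_ltn_trans lek kjT).
have ltij : (i < j)%N.
  rewrite ltn_neqAle lij andbT; apply/negP => /eqP e.
  have e' : i = j by apply: val_inj.
  have := hi kj (leqnn _); rewrite /Pi e' -/(Pj kj) hj //.
have tr : forall k, (k <= kj)%N ->
    transcript gamma L A v ALG k = transcript gamma L A (vsh v i) ALG k.
  elim => [//|k IH] lek /=.
  rewrite IH ?(ltnW lek) //; congr rcons.
  have nPi := hi k (ltnW lek).
  rewrite /Pi /corr_cond /query IH ?(ltnW lek) // in nPi.
  set x := ALG (transcript gamma L A (vsh v i) ALG k) in nPi *.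
  have kT : (k < T)%N by apply: (leq_ltn_trans (ltnW lek) kjT).
  have hx : forall l : 'I_N, (i < l)%N -> `|ip x (v l)| < gamma / 4.
    by move=> l il; exact: hyp.
  case: (boolP (norm_inf_Ax A x <= 2 / L)) => hn.
    apply: (@oracle_eq _ _ _ (vterm gamma v x i)).
      by right; exists i; rewrite /vsh leqnn.
    move=> l; rewrite /vsh; case: ifP => [_|]; first by rewrite eqxx.
    move/negbT; rewrite -ltnNge => il _.
    rewrite hn andbT in nPi; move: nPi => /negbT; rewrite -ltNge => ai.
    have bl := hx l il.
    move: ai bl => /ltr_normlP [ai1 ai2] /ltr_normlP [bl1 bl2].
    have hl : (i.+1)%:R + 1 <= (l.+1)%:R :> R by rewrite natr1 ler_nat.
    have hl' : (i.+1)%:R * gamma + gamma <= (l.+1)%:R * gamma.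
      by rewrite -[X in _ + X]mul1r -mulrDl ler_wpM2r // ltW.
    rewrite /vterm leqNgt il /= ip0 (ip_sym (v i)) (ip_sym (v l)); split; lra.
  apply: (@oracle_eq _ _ _ (aterm L A x)); first by left.
  move=> l; rewrite /vsh; case: ifP => [_|]; first by rewrite eqxx.
  move/negbT; rewrite -ltnNge => il _.
  have bl := hx l il.
  move: bl => /ltr_normlP [bl1 bl2].
  rewrite -ltNge in hn.
  have h2 : 2 < L * norm_inf_Ax A x.
    by rewrite -ltr_pdivrMl // mulrC.
  have hl : 1 <= (l.+1)%:R :> R by rewrite ler1n.
  have hl' : gamma <= (l.+1)%:R * gamma.
    by rewrite -[X in X <= _]mul1r ler_wpM2r // ltW.
  rewrite /vterm /aterm leqNgt il /= ip0 (ip_sym (v l)); split; lra.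
move: hj; rewrite /Pj /corr_cond /query tr // => /andP [hj _].
have := hyp i j kj ltij kjT.
by rewrite /query ltNge hj.
Qed.
End Det.
Section Chern.
Variable R : realType.
Definition sgb (b : bool) : R := if b then 1 else -1.

Lemma factor_bound (y : R) : y ^+ 2 <= 1 / 4 ->
  expR y + expR (- y) <= 2 * expR (2 * y ^+ 2).
Proof.
move=> hy.
have y1 : y < 1 by nra.
have y2 : -1 < y by nra.
set u := expR y; set w := expR (- y).
have u0 : 0 <= u by exact: expR_ge0.
have w0 : 0 <= w by exact: expR_ge0.
have uw : u * w = 1 by rewrite /u /w -expRD subrr expR0.
have hw : 1 - y <= w by have := expR_ge1Dx (- y); rewrite /w; lra.
have hu : 1 + y <= u by have := expR_ge1Dx y; rewrite /u; lra.
have h1 : u * (1 - y) <= 1 by rewrite -[X in _ <= X]uw ler_wpM2l.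
have h2 : w * (1 + y) <= 1 by rewrite -[X in _ <= X]uw [u * w]mulrC ler_wpM2l.
have h3 : (1 - y ^+ 2) * (u + w) <= 2.
  have -> : (1 - y ^+ 2) * (u + w) = u * (1 - y) * (1 + y) + w * (1 + y) * (1 - y)
    by ring.
  have a1 : u * (1 - y) * (1 + y) <= 1 + y by nra.
  have a2 : w * (1 + y) * (1 - y) <= 1 - y by nra.
  lra.
have h4 : 2 * (1 + 2 * y ^+ 2) <= 2 * expR (2 * y ^+ 2).
  by rewrite ler_pM2l //; exact: expR_ge1Dx.
apply: le_trans h4.
have hp : 0 < 1 - y ^+ 2 by lra.
rewrite -(ler_pM2l hp).
apply: (le_trans h3).
nra.
Qed.

Lemma chernoff (n : nat) (b : 'I_n -> R) (lam t : R) : 0 < lam ->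
  (#|[set tau : {ffun 'I_n -> bool} | t <= \sum_k b k * sgb (tau k)]|)%:R
  <= expR (- (lam * t)) * \prod_k (expR (lam * b k) + expR (- (lam * b k))).
Proof.
move=> l0.
rewrite -sum1dep_card natr_sum big_mkcond /=.
have -> : \prod_k (expR (lam * b k) + expR (- (lam * b k))) =
   \sum_(tau : {ffun 'I_n -> bool}) \prod_k expR (lam * b k * sgb (tau k)).
  rewrite -(bigA_distr_bigA (fun k (j : bool) => expR (lam * b k * sgb j))) /=.
  apply: eq_bigr => k _.
  by rewrite big_bool /= /sgb mulr1 mulrN1.
rewrite mulr_sumr; apply: ler_sum => tau _.
rewrite -expR_sum -expRD.
case: ifP => h; last exact: expR_ge0.
have -> : \sum_k lam * b k * sgb (tau k) = lam * \sum_k b k * sgb (tau k).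
  by rewrite mulr_sumr; apply: eq_bigr => k _; rewrite mulrA.
set S := \sum_k _ in h *.
have : 0 <= lam * (S - t) by apply: mulr_ge0; [exact: ltW | rewrite subr_ge0].
have := expR_ge1Dx (- (lam * t) + lam * S).
lra.
Qed.

Lemma prod_bound (n : nat) (b : 'I_n -> R) (lam : R) :
  (forall k, (lam * b k) ^+ 2 <= 1 / 4) ->
  \prod_k (expR (lam * b k) + expR (- (lam * b k)))
  <= 2 ^+ n * expR (2 * lam ^+ 2 * \sum_k b k ^+ 2).
Proof.
move=> hb.
apply: (@le_trans _ _ (\prod_(k < n) (2 * expR (2 * (lam * b k) ^+ 2)))).
  apply: ler_prod => k _; rewrite addr_ge0 ?expR_ge0 //=.
  exact: factor_bound.
rewrite big_split /= prodr_const card_ord -expR_sum mulr_sumr.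
rewrite le_eqVlt; apply/orP; left; apply/eqP.
congr (_ * expR _); apply: eq_bigr => k _.
by rewrite exprMn mulrA.
Qed.

Lemma tail2 (n : nat) (b : 'I_n -> R) (lam t : R) : 0 < lam ->
  (forall k, (lam * b k) ^+ 2 <= 1 / 4) ->
  (#|[set tau : {ffun 'I_n -> bool} | t <= `|\sum_k b k * sgb (tau k)|]|)%:R
  <= 2 * (expR (- (lam * t)) * (2 ^+ n * expR (2 * lam ^+ 2 * \sum_k b k ^+ 2))).
Proof.
move=> l0 hb.
set Ap := [set tau : {ffun 'I_n -> bool} | t <= \sum_k b k * sgb (tau k)].
set Am := [set tau : {ffun 'I_n -> bool} | t <= \sum_k (- b k) * sgb (tau k)].
have sub : [set tau : {ffun 'I_n -> bool} | t <= `|\sum_k b k * sgb (tau k)|]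
    \subset Ap :|: Am.
  apply/fintype.subsetP => tau; rewrite !inE.
  have -> : \sum_k (- b k) * sgb (tau k) = - \sum_k b k * sgb (tau k).
    by rewrite -sumrN; apply: eq_bigr => k _; rewrite mulNr.
  set S := \sum_k _.
  case: (lerP 0 S) => hS; first by rewrite ger0_norm // => ->.
  by rewrite ltr0_norm // => ->; rewrite orbT.
apply: (@le_trans _ _ (#|Ap|%:R + #|Am|%:R)).
  rewrite -natrD ler_nat; apply: (leq_trans (subset_leq_card sub)).
  exact: leq_card_setU.
have hbm : forall k, (lam * (- b k)) ^+ 2 <= 1 / 4 by move=> k; rewrite mulrN sqrrN.
have e0 : 0 <= expR (- (lam * t)) by exact: expR_ge0.
have p1 := @prod_bound n b lam hb.
have p2 := @prod_bound n (fun k => - b k) lam hbm.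
have c1 := @chernoff n b lam t l0.
have c2 := @chernoff n (fun k => - b k) lam t l0.
rewrite -/Ap in c1; rewrite -/Am in c2.
have es : \sum_k (- b k) ^+ 2 = \sum_k b k ^+ 2.
  by apply: eq_bigr => k _; rewrite sqrrN.
rewrite es in p2.
have q1 := ler_wpM2l e0 p1.
have q2 := ler_wpM2l e0 p2.
lra.
Qed.

Lemma cardR (T : finType) (P : pred T) :
  (#|[set x | P x]|)%:R = \sum_x (if P x then 1 else 0 : R).
Proof. by rewrite -sum1dep_card natr_sum big_mkcond. Qed.

Definition flip (I : finType) (n : nat) (l : I) (tau : {ffun 'I_n -> bool})
  (s : {ffun I * 'I_n -> bool}) : {ffun I * 'I_n -> bool} :=
  [ffun p => if p.1 == l then s p (+) tau p.2 else s p].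

Arguments flip {I n} l tau s.

Lemma flipK (I : finType) (n : nat) (l : I) tau : involutive (@flip I n l tau).
Proof.
move=> s; apply/ffunP => p; rewrite !ffunE.
by case: (p.1 == l) => //; rewrite addbK.
Qed.

Lemma flip_count (I : finType) (n : nat) (l : I)
  (P : {ffun I * 'I_n -> bool} -> bool) (B : R) :
  (forall s, (#|[set tau : {ffun 'I_n -> bool} | P (flip l tau s)]|)%:R <= B) ->
  (#|[set s | P s]|)%:R * (2 ^+ n) <= (#|{: {ffun I * 'I_n -> bool}}|)%:R * B.
Proof.
move=> hB.
have e2 : (2 ^+ n : R) = \sum_(tau : {ffun 'I_n -> bool}) 1.
  by rewrite sumr_const card_ffun card_bool card_ord -natrX.
rewrite e2 mulr_sumr.
have -> : \sum_(tau : {ffun 'I_n -> bool}) (#|[set s | P s]|)%:R * 1 =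
          \sum_(tau : {ffun 'I_n -> bool}) \sum_s (if P (flip l tau s) then 1 else 0 : R).
  apply: eq_bigr => tau _; rewrite mulr1 cardR.
  by rewrite (reindex_inj (can_inj (@flipK I n l tau))).
rewrite exchange_big /=.
have -> : (#|{: {ffun I * 'I_n -> bool}}|)%:R * B =
          \sum_(s : {ffun I * 'I_n -> bool}) B by rewrite sumr_const mulr_natl.
apply: ler_sum => s _; rewrite -cardR; exact: hB.
Qed.
End Chern.
Arguments flip {I n} l tau s.

Lemma term_le_sum (R : realType) (I : finType) (F : I -> R) j :
  (forall i, 0 <= F i) -> F j <= \sum_i F i.
Proof. by move=> h; rewrite (bigD1 j) //= lerDl sumr_ge0. Qed.

Section Event.
Variables (R : realType) (d m N : nat) (gamma L : R) (A : 'M[R]_(m, d))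
  (ALG : seq (R * 'cV[R]_d) -> 'cV[R]_d).
Hypothesis ball : forall h, in_ball (ALG h).
Hypothesis d0 : (0 < d)%N.

Definition Bad (s : {ffun 'I_N * 'I_d -> bool}) (i l : 'I_N) (k : nat) : bool :=
  gamma / 4 <= `|ip (query gamma L A (vsh R d N (vec_of R s) i) ALG k) (vec_of R s l)|.

Lemma vsh_flip s tau (i l : 'I_N) : (i < l)%N ->
  vsh R d N (vec_of R (flip l tau s)) i = vsh R d N (vec_of R s) i.
Proof.
move=> il; rewrite /vsh; apply: funext => l'; case: ifP => // h.
have ne : l' != l by rewrite -val_eqE /= neq_ltn (leq_ltn_trans h il).
by apply/matrixP => a b; rewrite !mxE ffunE /= (negbTE ne).
Qed.

Lemma ip_flip (x : 'cV[R]_d) s tau (l : 'I_N) :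
  ip x (vec_of R (flip l tau s) l) =
  \sum_k (- (x k 0 * sgb R (s (l, k))) / Num.sqrt (d%:R : R)) * sgb R (tau k).
Proof.
rewrite /ip; apply: eq_bigr => k _; rewrite mxE ffunE /= eqxx.
by case: (s (l, k)); case: (tau k); rewrite /sgb /=; ring.
Qed.

Lemma bad_bound (i l : 'I_N) (k : nat) : (i < l)%N ->
  (#|[set s | Bad s i l k]|)%:R <=
  (#|{: {ffun 'I_N * 'I_d -> bool}}|)%:R *
    (2 * expR (1 / 2 - Num.sqrt (d%:R : R) * gamma / 8)).
Proof.
move=> il.
set sd := Num.sqrt (d%:R : R).
have sd0 : 0 < sd by rewrite sqrtr_gt0 ltr0n.
set lam := sd / 2.
have lam0 : 0 < lam by rewrite /lam divr_gt0.
set B := 2 * (expR (- (lam * (gamma / 4))) * (2 ^+ d * expR (1 / 2))).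
have key := @flip_count R _ d l (fun s => Bad s i l k) B.
have hB : forall s, (#|[set tau : {ffun 'I_d -> bool} | Bad (flip l tau s) i l k]|)%:R <= B.
  move=> s.
  set x := query gamma L A (vsh R d N (vec_of R s) i) ALG k.
  set b := fun k0 : 'I_d => - (x k0 0 * sgb R (s (l, k0))) / sd.
  have -> : [set tau : {ffun 'I_d -> bool} | Bad (flip l tau s) i l k] =
            [set tau : {ffun 'I_d -> bool} | gamma / 4 <= `|\sum_k0 b k0 * sgb R (tau k0)|].
    by apply/setP => tau; rewrite !inE /Bad vsh_flip // ip_flip.
  have xb : in_ball x by exact: ball.
  have xk : forall k0, x k0 0 ^+ 2 <= 1.
    move=> k0; apply: le_trans xb; apply: term_le_sum => j; exact: sqr_ge0.
  have sg2 : forall k0, sgb R (s (l, k0)) ^+ 2 = 1 by move=> k0; rewrite /sgb; case: ifP => _; rewrite ?expr1n ?sqrrN ?expr1n.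
  have lb : forall k0, (lam * b k0) ^+ 2 = x k0 0 ^+ 2 / 4.
    move=> k0; rewrite /lam /b.
    have -> : sd / 2 * (- (x k0 0 * sgb R (s (l, k0))) / sd) = - (x k0 0 * sgb R (s (l, k0))) / 2.
      by field; apply/lt0r_neq0.
    by rewrite expr_div_n sqrrN exprMn sg2 mulr1; congr (_ / _); ring.
  apply: le_trans (@tail2 R d b lam (gamma / 4) lam0 _) _.
    by move=> k0; rewrite lb; have := xk k0; lra.
  have hs : 2 * lam ^+ 2 * \sum_k0 b k0 ^+ 2 <= 1 / 2.
    have -> : 2 * lam ^+ 2 * \sum_k0 b k0 ^+ 2 = (\sum_k0 x k0 0 ^+ 2) / 2.
      rewrite mulr_sumr mulr_suml; apply: eq_bigr => k0 _.
      by rewrite -mulrA -exprMn lb; field.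
    by have := xb; rewrite /in_ball; lra.
  rewrite /B ler_pM2l // ler_wpM2l ?expR_ge0 // ler_wpM2l ?exprn_ge0 //.
  by rewrite ler_expR.
have := key hB.
rewrite /B.
have e2 : 0 < 2 ^+ d :> R by rewrite exprn_gt0.
set C := (#|{: {ffun 'I_N * 'I_d -> bool}}|)%:R.
have -> : C * (2 * (expR (- (lam * (gamma / 4))) * (2 ^+ d * expR (1 / 2)))) =
          (C * (2 * expR (1 / 2 - sd * gamma / 8))) * 2 ^+ d.
  rewrite [1 / 2 - _]addrC expRD.
  have -> : - (lam * (gamma / 4)) = - (sd * gamma / 8) by rewrite /lam; field.
  ring.
by rewrite ler_pM2r.
Qed.
End Event.

Lemma fail_bound (R : realType) (d : nat) (delta : R) (A : 'M[R]_(d./2, d))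
  (ALG : seq (R * 'cV[R]_d) -> 'cV[R]_d) (T : nat) :
  (0 < d)%N -> (forall h, in_ball (ALG h)) -> 0 < gam d delta -> 0 < LL R d ->
  fail_prob delta A ALG T <=
  (NN d delta)%:R * (NN d delta)%:R * T%:R *
    (2 * expR (1 / 2 - Num.sqrt (d%:R : R) * gam d delta / 8)).
Proof.
move=> d0 ball g0 L0.
set N := NN d delta.
set gamma := gam d delta.
set L := LL R d.
set p := 2 * expR (1 / 2 - Num.sqrt (d%:R : R) * gamma / 8).
set C := (#|{: {ffun 'I_N * 'I_d -> bool}}|)%:R : R.
have C0 : 0 < C by rewrite ltr0n card_ffun card_bool expn_gt0.
have p0 : 0 <= p by rewrite mulr_ge0 ?expR_ge0.
rewrite /fail_prob -/N ler_pdivrMr -/C // cardR.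
set F := fun (s : {ffun 'I_N * 'I_d -> bool}) (i l : 'I_N) (k : 'I_T) =>
  (if (i < l)%N && @Bad R d d./2 N gamma L A ALG s i l k then 1 else 0 : R).
apply: (@le_trans _ _ (\sum_s \sum_(i : 'I_N) \sum_(l : 'I_N) \sum_(k : 'I_T) F s i l k)).
  apply: ler_sum => s _.
  have Fge0 : forall i l k, 0 <= F s i l k by move=> i l k; rewrite /F; case: ifP.
  case: ifP => ns; last by apply: sumr_ge0 => a _; apply: sumr_ge0 => b _; apply: sumr_ge0 => c _.
  case: (lerP 1 (\sum_(i : 'I_N) \sum_(l : 'I_N) \sum_(k : 'I_T) F s i l k)) => // hlt.
  exfalso; move/negP: ns; apply.
  apply/forallP => i; apply/forallP => j; apply/implyP => ij.
  apply: (@det_main R d d./2 N gamma L A ALG (vec_of R s) T g0 L0 _ i j ij).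
  move=> i' l' k il kT.
  have le1 : F s i' l' (Ordinal kT) < 1.
    apply: le_lt_trans hlt.
    have t1 : \sum_(b : 'I_N) \sum_(c : 'I_T) F s i' b c <=
              \sum_(a : 'I_N) \sum_(b : 'I_N) \sum_(c : 'I_T) F s a b c.
      apply: (@term_le_sum R _ (fun a : 'I_N => \sum_(b : 'I_N) \sum_(c : 'I_T) F s a b c) i').
      by move=> a; apply: sumr_ge0 => b _; apply: sumr_ge0 => c _.
    have t2 : \sum_(c : 'I_T) F s i' l' c <= \sum_(b : 'I_N) \sum_(c : 'I_T) F s i' b c.
      apply: (@term_le_sum R _ (fun b : 'I_N => \sum_(c : 'I_T) F s i' b c) l').
      by move=> b; apply: sumr_ge0 => c _.
    have t3 : F s i' l' (Ordinal kT) <= \sum_(c : 'I_T) F s i' l' c.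
      exact: (@term_le_sum R _ (fun c : 'I_T => F s i' l' c) (Ordinal kT)).
    exact: le_trans t3 (le_trans t2 t1).
  move: le1; rewrite /F il andTb /Bad.
  by case: ifP => [_|/negbT]; [rewrite ltxx | rewrite -ltNge].
apply: (@le_trans _ _ (\sum_(i : 'I_N) \sum_(l : 'I_N) \sum_(k : 'I_T) (C * p))).
  rewrite exchange_big; apply: ler_sum => i _.
  rewrite exchange_big; apply: ler_sum => l _.
  rewrite exchange_big; apply: ler_sum => k _.
  rewrite /F; case: (ltnP i l) => il.
    under eq_bigr do rewrite andTb.
    by rewrite -cardR; exact: (@bad_bound R d d./2 N gamma L A ALG ball d0 i l k il).
  rewrite big1; first by apply: mulr_ge0; [exact: ltW | exact: p0].
  move=> s _; cbv beta; reflexivity.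
clearbody C p. clearbody N gamma L.
rewrite !sumr_const !card_ord -!mulrnA -[(C * p) *+ _]mulr_natr !natrM.
rewrite le_eqVlt; apply/orP; left; apply/eqP; ring.
Qed.

Local Open Scope classical_set_scope.
Local Open Scope ring_scope.

Theorem lemma4p2 (R : realType) (delta : R) (eps : nat -> R) :
  0 < delta < 1 ->
  eps @ \oo --> (0 : R^o) ->
  forall c : R, 0 < c ->
  exists d0 : nat, forall (d T : nat), (d0 <= d)%N -> ~~ odd d ->
    T%:R <= (d%:R : R) `^ (1 + delta / 6 - eps d) ->
    forall A : 'M[R]_(d./2, d), (forall i j, A i j = 1 \/ A i j = -1) ->
    forall ALG : seq (R * 'cV[R]_d) -> 'cV[R]_d,
      (forall h, in_ball (ALG h)) ->
      fail_prob delta A ALG T <= (d%:R : R) `^ (- c).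
Proof.
move=> /andP [dl0 dl1] heps c c0.
have h2 : (0 : R) < 1 / 2 by lra.
have [n0 _ hn] := @cvgr_dist_lt _ _ _ _ _ eps 0 heps (1 / 2) h2.
set K := (Num.truncn (expR (8 * (c + 6)) : R)).+1.
exists (maxn n0 K) => d T hd _ hT A _ ALG ball.
have hdn0 : (n0 <= d)%N by apply: leq_trans hd; exact: leq_maxl.
have hdK : (K <= d)%N by apply: leq_trans hd; exact: leq_maxr.
have epsd : `|eps d| < 1 / 2.
  by have := hn d hdn0; rewrite /= sub0r normrN.
set D := (d%:R : R).
have DK : expR (8 * (c + 6)) < D.
  apply: lt_le_trans (truncnS_gt _) _; rewrite /D ler_nat; exact: hdK.
have D0 : 0 < D by apply: lt_trans DK; exact: expR_gt0.
have D2 : 2 <= D.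
  have := expR_ge1Dx (8 * (c + 6)); lra.
have d0 : (0 < d)%N by rewrite -(ltr0n R).
set l := ln D.
have lD : 8 * (c + 6) < l.
  by rewrite /l -[X in X < _]expRK ltr_ln // posrE ?expR_gt0.
have l0 : 0 < l by lra.
have Dl : D = expR l by rewrite /l lnK // posrE.
have g0 : 0 < gam d delta.
  by rewrite /gam -/D -/l divr_gt0 ?exprn_gt0 // powR_gt0.
have L0 : 0 < LL R d by rewrite /LL expR_gt0.
apply: le_trans (@fail_bound R d delta A ALG T d0 ball g0 L0) _.
rewrite -/D.
have D1 : 1 <= D by lra.
have l1 : 1 <= l by lra.
have hN : (NN d delta)%:R <= D.
  rewrite /NN -/D -/l.
  have P0 : 0 <= D `^ (delta / 6) by exact: powR_ge0.
  have l4 : 1 <= l ^+ 4 by rewrite exprn_ege1.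
  apply: (@le_trans _ _ (D `^ (delta / 6) / l ^+ 4)).
    by rewrite truncn_le divr_ge0 // exprn_ge0 // ltW.
  apply: (@le_trans _ _ (D `^ (delta / 6))).
    by rewrite ler_pdivrMr ?(lt_le_trans ltr01 l4) // ler_peMr.
  by apply: ler1_powR => //; lra.
have hT' : T%:R <= D * D.
  apply: le_trans hT _; rewrite -/D.
  have -> : D * D = D `^ 2 by rewrite -expr2 -[2]/(2%:R) powR_mulrn // ltW.
  apply: ler_powR => //.
  move/ltr_normlP: epsd => [e1 e2]; lra.
have hsq : l ^+ 2 <= Num.sqrt D * gam d delta.
  rewrite /gam -/D -/l.
  have P0 : 0 < D `^ (delta / 4) by exact: powR_gt0.
  have hP : D `^ (delta / 4) <= Num.sqrt D.
    rewrite -powR12_sqrt; last exact: ltW.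
    apply: ler_powR => //; lra.
  have s0 : 0 <= l ^+ 2 by apply: sqr_ge0.
  have s1 : 1 <= (D `^ (delta / 4))^-1 * Num.sqrt D.
    by rewrite mulrC ler_pdivlMr // mul1r.
  by rewrite mulrC -mulrA ler_peMr.
have hp : 2 * expR (1 / 2 - Num.sqrt D * gam d delta / 8) <= D * expR (1 / 2 - l ^+ 2 / 8).
  apply: ler_pM => //.
  by rewrite ler_expR; lra.
have N0 : 0 <= (NN d delta)%:R :> R by [].
apply: (@le_trans _ _ (D * D * (D * D) * (D * expR (1 / 2 - l ^+ 2 / 8)))).
  apply: ler_pM => //.
  by apply: ler_pM => //; apply: ler_pM.
have -> : D * D * (D * D) * (D * expR (1 / 2 - l ^+ 2 / 8)) =
          expR (l + l + (l + l) + (l + (1 / 2 - l ^+ 2 / 8))).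
  by rewrite !expRD -Dl.
rewrite /powR (negbTE (lt0r_neq0 D0)) -/l ler_expR.
nra.
Qed.
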